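(* Let $(\hat p_n)_{n\ge0}$ be the monic orthogonal polynomials with respect to a positive Borel measure on $\mathbb{R}$ with infinitely many points in its support. Then there exist sequences of positive numbers $(\rho_n)_{n\ge0}$ such that the normalized polynomials $p_n(x)=\rho_n\hat p_n(x)$ satisfy: for any positive integer $K$ and any real numbers $\gamma_0,\dots,\gamma_K$ with $\gamma_0=1$ and $\gamma_K\neq0$, the polynomials $$q_n(x)=\sum_{j=0}^K\gamma_jp_{n-j}(x)$$ have only real zeros for all $n$ sufficiently large (how large depending only on $K$ and $\gamma_0,\dots,\gamma_K$). *)

(* Defs.v *)
From HB Require Import structures.
From mathcomp Require Import all_boot all_order all_algebra.
From mathcomp Require Import all_classical all_reals all_analysis.
From mathcomp Require Import complex.
Set Implicit Arguments. Unset Strict Implicit. Unset Printing Implicit Defensive.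
Import Order.TTheory GRing.Theory Num.Theory.
Local Open Scope ring_scope.
Local Open Scope classical_set_scope.

Definition msupport (R : realType) (mu : {measure set R -> \bar R}) : set R :=
  [set x : R | forall e : R, (0 < e)%R ->
     (0 < mu [set y : R | ((x - e < y) && (y < x + e))%R])%E].

Definition finite_moments (R : realType) (mu : {measure set R -> \bar R}) :=
  forall k : nat, mu.-integrable setT (fun x : R => (x ^+ k)%:E).

Definition monic_OPS (R : realType) (mu : {measure set R -> \bar R})
  (ph : nat -> {poly R}) :=
  (forall n, ph n \is monic) /\ (forall n, size (ph n) = n.+1) /\
  (forall n m, n <> m ->
     (\int[mu]_x ((ph n).[x] * (ph m).[x])%:E = 0)%E).

Definition only_real_zeros (R : realType) (p : {poly R}) : Prop :=
  forall z : R[i], root (map_poly (fun r : R => r%:C)%C p) z -> complex.Im z = 0.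

(* Main.v *)
Require Import Defs.
From HB Require Import structures.
From mathcomp Require Import all_boot all_order all_algebra.
From mathcomp Require Import all_classical all_reals all_analysis.
From mathcomp Require Import complex finmap measurable_realfun.
From mathcomp Require Import ring lra zify.
From Stdlib Require Import Lia.
Import Order.TTheory GRing.Theory Num.Theory numFieldNormedType.Exports.
Local Open Scope ring_scope.
Local Open Scope classical_set_scope.
Section S.
Variable R : realType.
Implicit Types p q : {poly R}.

Lemma poly_ivt p (a b : R) : a <= b -> p.[a] * p.[b] <= 0 ->
  exists2 c, a <= c <= b & root p c.
Proof.
move=> ab hab.
have mm : Num.min (horner p a) (horner p b) <= 0 <= Num.max (horner p a) (horner p b).
  have: (p.[a] <= 0 /\ 0 <= p.[b]) \/ (p.[b] <= 0 /\ 0 <= p.[a]).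
    by case: (lerP p.[a] 0) => ha; case: (lerP 0 p.[b]) => hb; [left|right|right|right]; split; nra.
  by case=> -[h1 h2]; rewrite /= ge_min le_max h1 h2 ?orbT.
case: (@IVT R (horner p) a b 0 ab _ mm) => [|c cab fc].
  exact/continuous_subspaceT/continuous_horner.
by exists c; [move: cab; rewrite in_itv | apply/rootP].
Qed.

Lemma roots_of_pos (P : {poly R}) n : size P = n.+1 ->
  (forall T W : {poly R}, P = T * W -> W != 0 -> (size W <= n)%N ->
     (forall x, 0 <= T.[x]) -> False) ->
  exists rs, [/\ uniq rs, size rs = n & all (root P) rs].
Proof.
move=> sP H.
have P0 : P != 0 by rewrite -size_poly_eq0 sP.
suff: forall k, (k <= n)%N -> exists rs, [/\ uniq rs, size rs = k & all (root P) rs].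
  by apply; exact: leqnn.
elim=> [_|k IH kn]; first by exists [::].
have [rs [urs srs ars]] := IH (ltnW kn).
have urs' : uniq_roots rs by rewrite uniq_rootsE.
have [S PS] := uniq_roots_prod_XsubC ars urs'.
set A := \prod_(z <- rs) ('X - z%:P) in PS.
have A0 : A != 0 by rewrite -size_poly_eq0 size_prod_XsubC.
have S0 : S != 0 by apply: contraNneq P0 => S0; rewrite PS S0 mul0r.
have sA : size A = k.+1 by rewrite size_prod_XsubC srs.
case: (pselect (exists r, root S r)) => [[r Sr]|noroot].
- case: (boolP (r \in rs)) => rin.
  + exfalso.
    have /factor_theorem [S1 HS1] := Sr.
    have /factor_theorem [A1 HA1] : root A r by rewrite root_prod_XsubC.
    have S10 : S1 != 0 by apply: contraNneq S0 => e; rewrite HS1 e mul0r.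
    have A10 : A1 != 0 by apply: contraNneq A0 => e; rewrite HA1 e mul0r.
    have W0 : S1 * A1 != 0 by rewrite mulf_neq0.
    have PTW : P = ('X - r%:P) ^+ 2 * (S1 * A1) by rewrite PS HS1 HA1 expr2; ring.
    apply: (H _ _ PTW W0).
    * have := size_mul (expf_neq0 2 (negbT (polyXsubC_eq0 r))) W0.
      rewrite -PTW sP size_exp_XsubC => h.
      move: h; case: (size (S1 * A1)) => [|m] /=; lia.
    * by move=> x; rewrite horner_exp hornerXsubC sqr_ge0.
  + exists (r :: rs); split => /=; first by rewrite rin urs.
    * by rewrite srs.
    * by rewrite ars andbT PS rootM Sr.
- exfalso.
  set c := S.[0].
  have pos : forall x, 0 < c * S.[x].
    move=> x; rewrite ltNge; apply/negP => h.
    have Sx : forall y, S.[y] != 0.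
      by move=> y; apply/negP => /eqP h0; apply: noroot; exists y; apply/rootP.
    case: (lerP 0 x) => hx.
    + have [y _ ry] := poly_ivt S 0 x hx h; by apply: noroot; exists y.
    + have h' : S.[x] * S.[0] <= 0 by rewrite mulrC.
      have [y _ ry] := poly_ivt S x 0 (ltW hx) h'; by apply: noroot; exists y.
  have c0 : c != 0 by apply: contraTneq (pos 0) => ->; rewrite mul0r ltxx.
  apply: (H (c *: S) (c^-1 *: A)).
  * by rewrite PS -scalerAl -scalerAr scalerA mulfV ?scale1r.
  * by rewrite scaler_eq0 invr_eq0 negb_or c0 A0.
  * by rewrite size_scale ?invr_eq0 // sA.
  * by move=> x; rewrite hornerZ ltW.
Qed.


Lemma sep1 (a : R) (rs : seq R) : exists2 e, 0 < e &
  forall y, y \in rs -> y != a -> e < `|a - y|.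
Proof.
elim: rs => [|b rs [e e0 He]]; first by exists 1 => // y; rewrite in_nil.
case: (eqVneq b a) => [->|ba].
  exists e => // y; rewrite inE => /orP[/eqP ->|]; first by rewrite eqxx.
  exact: He.
have ab0 : 0 < `|a - b| by rewrite normr_gt0 subr_eq0 eq_sym.
exists (Num.min e (`|a - b| / 2)).
  by rewrite lt_min e0 divr_gt0.
move=> y; rewrite inE => /orP[/eqP ->|yrs ya].
  by move=> _; rewrite gt_min; apply/orP; right; lra.
by rewrite gt_min He.
Qed.

Lemma sep (rs : seq R) : exists2 d, 0 < d &
  forall x y, x \in rs -> y \in rs -> x != y -> d < `|x - y|.
Proof.
elim: rs => [|a rs [d d0 Hd]]; first by exists 1 => // x y; rewrite in_nil.
have [e e0 He] := sep1 a rs.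
exists (Num.min d e); first by rewrite lt_min d0 e0.
move=> x y; rewrite !inE => /orP[/eqP ->|xr] /orP[/eqP ->|yr]; rewrite ?eqxx //.
- by move=> ay; rewrite gt_min He ?orbT // eq_sym.
- by move=> xa; rewrite distrC gt_min He ?orbT.
- by move=> xy; rewrite gt_min Hd.
Qed.

Lemma sign_change (rs : seq R) (d r : R) : uniq rs -> r \in rs -> 0 < d ->
  (forall y, y \in rs -> y != r -> d < `|r - y|) ->
  (\prod_(z <- rs) ('X - z%:P)).[r - d] * (\prod_(z <- rs) ('X - z%:P)).[r + d] < 0.
Proof.
move=> urs rin d0 Hy.
rewrite !horner_prod -big_split /= (bigD1_seq r) //= !hornerXsubC.
have : 0 < \prod_(i <- rs | i != r) (('X - i%:P).[r - d] * ('X - i%:P).[r + d]).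
  rewrite big_seq_cond; apply: prodr_gt0 => y /andP[yin yr].
  rewrite !hornerXsubC.
  have := Hy y yin yr; rewrite ltr_normr => /orP[] h; nra.
set b := \prod_(i <- rs | i != r) _.
move=> b0.
have -> : (r - d - r) * (r + d - r) = - (d * d) by ring.
by rewrite mulNr oppr_lt0 !mulr_gt0.
Qed.

Lemma real_from_sign (Q : {poly R}) (rs : seq R) (d : R) : uniq rs ->
  size Q = (size rs).+1 -> 0 < d ->
  (forall x y, x \in rs -> y \in rs -> x != y -> 2 * d < `|x - y|) ->
  (forall r, r \in rs -> Q.[r - d] * Q.[r + d] < 0) -> only_real_zeros Q.
Proof.
move=> urs sQ d0 Hsep Hsg.
have : forall r, exists s, r \in rs -> (r - d <= s <= r + d) && root Q s.
  move=> r; case: (boolP (r \in rs)) => rin; last by exists 0.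
  have lerd : r - d <= r + d by lra.
  have [s hs rs'] := poly_ivt Q (r - d) (r + d) lerd (ltW (Hsg r rin)).
  by exists s => _; rewrite hs rs'.
case/choice => f Hf.
have uss : uniq (map f rs).
  rewrite map_inj_in_uniq // => x y xin yin fxy.
  apply/eqP; apply: contraT => nxy.
  have h1 := Hsep x y xin yin nxy.
  have /andP[/andP[a1 a2] _] := Hf x xin.
  have /andP[/andP[b1 b2] _] := Hf y yin.
  rewrite fxy in a1 a2.
  have : `|x - y| <= 2 * d by rewrite ler_norml; apply/andP; split; lra.
  lra.
have ass : all (root Q) (map f rs).
  by apply/allP => s /mapP [r rin ->]; case/andP: (Hf r rin).
have uss' : uniq_roots (map f rs) by rewrite uniq_rootsE.
have [q Qq] := uniq_roots_prod_XsubC ass uss'.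
have Q0 : Q != 0 by rewrite -size_poly_eq0 sQ.
have q0 : q != 0 by apply: contraNneq Q0 => e; rewrite Qq e mul0r.
have /size_poly1P [c c0 qc] : size q == 1.
  have pr0 : \prod_(z <- map f rs) ('X - z%:P) != 0.
    by rewrite -size_poly_eq0 size_prod_XsubC.
  have := size_mul q0 pr0.
  rewrite -Qq sQ size_prod_XsubC size_map.
  case: (size q) => [|m] /=; [lia | move=> h; apply/eqP; lia].
move=> z; rewrite Qq qc rmorphM /= map_polyC map_prod_XsubC rootM rootC.
rewrite /root horner_prod prodf_seq_eq0 => /orP[|/hasP [s _ /=]].
  by move/eqP => /(congr1 (@complex.Re R)) /= h; move: c0; rewrite h eqxx.
by rewrite hornerXsubC subr_eq0 => /eqP ->.
Qed.

End S.
Section M.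
Variable R : realType.
Variable mu : {measure set R -> \bar R}.
Hypothesis Hmom : finite_moments mu.

Lemma poly_int (p : {poly R}) : mu.-integrable setT (fun x => (p.[x])%:E).
Proof.
have -> : (fun x => (p.[x])%:E) =
    (fun x => \sum_(i < size p) ((p`_i)%:E * (x ^+ i)%:E)%E).
  by apply/funext => x; rewrite horner_coef -sumEFin; apply: eq_bigr => i _; rewrite EFinM.
apply: integrable_sum => // i _; apply: integrableZl => //; exact: Hmom.
Qed.

Variable ph : nat -> {poly R}.
Hypothesis Hops : monic_OPS mu ph.

Lemma orth_low k : forall (S : {poly R}) N, (size S <= k)%N -> (k <= N)%N ->
  (\int[mu]_x ((ph N).[x] * S.[x])%:E = 0)%E.
Proof.
case: Hops => Hmon [Hsz Horth].
elim: k => [|k IH] S N hS hN.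
  move: hS; rewrite leqn0 size_poly_eq0 => /eqP ->.
  rewrite (eq_integral (cst 0%E)); first exact: integral0.
  by move=> x _; rewrite horner0 mulr0.
set c := S`_k.
set S' := S - c *: ph k.
have hS' : (size S' <= k)%N.
  apply/leq_sizeP => j kj; rewrite /S' coefB coefZ.
  have lk : (ph k)`_k = 1.
    by have := Hmon k; rewrite monicE lead_coefE Hsz => /eqP.
  case: (ltngtP k j) kj => // [kj _|<- _]; last by rewrite lk mulr1 subrr.
  have /leq_sizeP -> := hS; last by [].
  have : (size (ph k) <= j)%N by rewrite Hsz.
  by move/leq_sizeP => ->; rewrite // mulr0 subrr.
have eq : forall x, ((ph N).[x] * S.[x])%:E =
   (((ph N * S').[x])%:E + c%:E * ((ph N * ph k).[x])%:E)%E.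
  move=> x; rewrite -EFinM -EFinD /S' !(hornerM, hornerD, hornerN, hornerZ).
  congr (_%:E); ring.
rewrite (eq_integral (fun x => (((ph N * S').[x])%:E + c%:E * ((ph N * ph k).[x])%:E)%E)); last first.
  by move=> x _; exact: eq.
rewrite integralD //; last first.
- by apply: integrableZl => //; exact: poly_int.
- exact: poly_int.
rewrite integralZl //; last exact: poly_int.
rewrite (eq_integral (fun x => ((ph N).[x] * S'.[x])%:E)); last first.
  by move=> x _; rewrite hornerM.
rewrite IH //; last exact: ltnW.
rewrite (eq_integral (fun x => ((ph N).[x] * (ph k).[x])%:E)); last first.
  by move=> x _; rewrite hornerM.
rewrite Horth ?mule0 ?adde0 //.
by move=> e; move: hN; rewrite e ltnn.
Qed.


Hypothesis Hinf : infinite_set (msupport mu).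

Lemma pos_int (F : {poly R}) : F != 0 -> (forall x, 0 <= F.[x]) ->
  (0 < \int[mu]_x (F.[x])%:E)%E.
Proof.
move=> F0 Fge0.
have [B BS cB] := infinite_set_fset (size F) Hinf.
have [x0 x0B Fx0] : exists2 x0, x0 \in B & F.[x0] != 0.
  case: (pselect (exists2 x0, x0 \in B & F.[x0] != 0)) => // nex; exfalso.
  have allr : all (root F) (enum_fset B).
    apply/allP => x xB; apply: contraT => nr; exfalso; apply: nex; exists x; [exact: xB | exact: nr].
  have := max_poly_roots F0 allr (fset_uniq B).
  by rewrite ltnNge cB.
have x0S : msupport mu x0 by apply: BS.
have c0 : 0 < F.[x0] by rewrite lt_def Fx0 Fge0.
have hc : F.[x0] / 2 < F.[x0] by lra.
have := cvgr_gt _ (@continuous_horner _ F x0) _ hc.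
move=> Hn; have [e /= e0 He] := proj1 (nbhs_ballP _ _) (Hn (nbhs_filter x0)).
set A := [set y : R | ((x0 - e < y) && (y < x0 + e))%R].
have mA : measurable A.
  rewrite (_ : A = `]x0 - e, x0 + e[%classic); first exact: measurable_itv.
  by apply/seteqP; split => y; rewrite /A /= in_itv.
have muA : (0 < mu A)%E by exact: x0S.
set c := F.[x0] / 2.
have c2 : 0 < c by rewrite /c; lra.
apply: (@lt_le_trans _ _ (\int[mu]_x (c * \1_A x)%:E)%E).
  rewrite (@integralZl_indic _ _ _ _ _ measurableT (fun=> A)) //; last first.
    by move=> h; move: c2; rewrite ltNge (ltW h).
  by rewrite integral_indic // setIT mule_gt0.
apply: ge0_le_integral => //.
- move=> x _; rewrite lee_fin mulr_ge0 // ?ltW //.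
- apply/measurable_EFinP; apply: measurable_funM => //.
- by apply: (measurable_int mu); exact: poly_int.
- move=> x _; rewrite lee_fin indicE.
  case: (boolP (x \in A)) => xA; last by rewrite mulr0.
  rewrite mulr1; apply: ltW; apply: He.
  move: xA; rewrite /A in_setE /= => /andP[h1 h2]. rewrite /ball /=.
  rewrite ltr_norml; apply/andP; split; lra.
Qed.

Lemma key n (T W : {poly R}) : ph n = T * W -> W != 0 -> (size W <= n)%N ->
  (forall x, 0 <= T.[x]) -> False.
Proof.
move=> hP W0 sW Tge0.
case: Hops => Hmon [Hsz Horth].
have P0 : ph n != 0 by rewrite -size_poly_eq0 Hsz.
have F0 : ph n * W != 0 by rewrite mulf_neq0.
have Fge0 : forall x, 0 <= (ph n * W).[x].
  by move=> x; rewrite hP !hornerM -mulrA mulr_ge0 // -expr2 sqr_ge0.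
have := @pos_int (ph n * W) F0 Fge0.
rewrite (eq_integral (fun x => ((ph n).[x] * W.[x])%:E)); last first.
  by move=> x _; rewrite hornerM.
by rewrite (orth_low n W n sW (leqnn n)) ltxx.
Qed.

Lemma le_sum_seq (I : eqType) (s : seq I) (F : I -> R) x :
  uniq s -> (forall i, 0 <= F i) -> x \in s -> F x <= \sum_(i <- s) F i.
Proof.
move=> us F0 xs; rewrite (bigD1_seq x) //= lerDl.
by apply: sumr_ge0 => i _.
Qed.

Lemma sgn_lemma (pa pb qa qb : R) :
  0 < pa * qa -> 0 < pb * qb -> pa * pb < 0 -> qa * qb < 0.
Proof.
move=> h1 h2 h3; have h := mulr_gt0 h1 h2.
have e : pa * qa * (pb * qb) = (pa * pb) * (qa * qb) by ring.
rewrite e in h; move: h h3.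
set X := pa * pb; set Y := qa * qb => h h3; nra.
Qed.

Lemma pert_lemma (rh P e : R) : 0 < rh -> P != 0 -> `|e| < rh * `|P| ->
  0 < P * (rh * P + e).
Proof.
move=> r0 P0; rewrite ltr_norml => /andP[h1 h2].
case: (ltrgtP P 0) P0 => // hP _.
- rewrite ltr0_norm // in h1 h2; nra.
- rewrite gtr0_norm // in h1 h2; nra.
Qed.

Lemma data n : exists p : seq R * R,
  [/\ uniq p.1, size p.1 = n, 0 < p.2,
      (forall r, r \in p.1 -> (ph n).[r - p.2] * (ph n).[r + p.2] < 0) &
      (forall x y, x \in p.1 -> y \in p.1 -> x != y -> 2 * p.2 < `|x - y|)].
Proof.
case: Hops => Hmon [Hsz Horth].
have [rs [urs srs ars]] := @roots_of_pos R (ph n) n (Hsz n) (fun T W h1 h2 h3 h4 => @key n T W h1 h2 h3 h4).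
have [d d0 Hd] := @sep R rs.
exists (rs, d / 2) => /=; split => //.
- by rewrite divr_gt0.
- move=> r rin.
  have urs' : uniq_roots rs by rewrite uniq_rootsE.
  have [q Pq] := uniq_roots_prod_XsubC ars urs'.
  have P0 : ph n != 0 by rewrite -size_poly_eq0 Hsz.
  have pr0 : \prod_(z <- rs) ('X - z%:P) != 0 by rewrite -size_poly_eq0 size_prod_XsubC.
  have q0 : q != 0 by apply: contraNneq P0 => e; rewrite Pq e mul0r.
  have /size_poly1P [c c0 qc] : size q == 1.
    have := size_mul q0 pr0.
    rewrite -Pq Hsz size_prod_XsubC srs.
    case: (size q) => [|m] /=; [lia | move=> h; apply/eqP; lia].
  have d20 : 0 < d / 2 by rewrite divr_gt0.
  have hs := @sign_change R rs (d / 2) r urs rin d20.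
  have hs' : (\prod_(z <- rs) ('X - z%:P)).[r - d / 2] *
       (\prod_(z <- rs) ('X - z%:P)).[r + d / 2] < 0.
    apply: hs => y yin yr.
    have ry : r != y by rewrite eq_sym.
    have := Hd r y rin yin ry; lra.
  rewrite Pq qc !hornerM !hornerC.
  move: hs'; set a := _.[_]; set b := _.[_] => hab.
  have cc : 0 < c * c by rewrite -expr2 exprn_even_gt0 //.
  have -> : c * a * (c * b) = (c * c) * (a * b) by ring.
  by rewrite pmulr_rlt0.
- by move=> x y xin yin xy; have := Hd x y xin yin xy; lra.
Qed.

Lemma main_sec : exists rho : nat -> R, (forall n, 0 < rho n) /\
    forall (K : nat) (gamma : nat -> R), (0 < K)%N -> gamma 0%N = 1 ->
      gamma K != 0 ->
      exists N : nat, (K <= N)%N /\ forall n : nat, (N <= n)%N ->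
        only_real_zeros (\sum_(j < K.+1) gamma j *: (rho (n - j)%N *: ph (n - j)%N)).
Proof.
case: Hops => Hmon [Hsz Horth].
case/choice: data => D HD.
pose B n := \sum_(r <- (D n).1) \sum_(m <- iota 0 n)
   (`|(ph m).[r - (D n).2]| / `|(ph n).[r - (D n).2]| +
    `|(ph m).[r + (D n).2]| / `|(ph n).[r + (D n).2]|).
have B0 : forall n, 0 <= B n.
  by move=> n; apply: sumr_ge0 => r _; apply: sumr_ge0 => m _; apply: addr_ge0.
pose f n := (n.+1)%:R * (1 + B n).
have f1 : forall n, 1 <= f n.
  move=> n; have h1 : (1 : R) <= (n.+1)%:R by rewrite ler1n.
  have := B0 n; rewrite /f; nra.
have f0 : forall n, 0 < f n by move=> n; apply: lt_le_trans (f1 n).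
pose rho n := \prod_(i < n.+1) f i.
have rho0 : forall n, 0 < rho n by move=> n; apply: prodr_gt0 => i _.
have rhoS : forall n, rho n.+1 = rho n * f n.+1.
  by move=> n; rewrite /rho big_ord_recr.
have rho_mono : forall m n, (m <= n)%N -> rho m <= rho n.
  move=> m n; elim: n => [|n IH]; first by rewrite leqn0 => /eqP ->.
  rewrite leq_eqVlt => /orP[/eqP -> //|]; rewrite ltnS => /IH h.
  rewrite rhoS; apply: (le_trans h).
  have := rho0 n; have := f1 n.+1; nra.
have rho_step : forall m n, (m < n)%N -> rho m <= rho n / f n.
  move=> m [//|n] mn; rewrite ler_pdivlMr // rhoS.
  have := rho_mono m n mn; have := f0 n.+1; have := rho0 m; nra.
have bound : forall n r m t, r \in (D n).1 -> (m < n)%N ->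
    (t = r - (D n).2 \/ t = r + (D n).2) ->
    (ph n).[t] != 0 /\ `|(ph m).[t]| <= B n * `|(ph n).[t]|.
  move=> n r m t rin mn ht.
  have [urs srs d0 sg Hsep] := HD n.
  have nz : (ph n).[t] != 0.
    have := sg r rin; case: ht => ->; apply: contraTneq => ->;
      by rewrite ?mul0r ?mulr0 ltxx.
  split => //.
  have Pt : 0 < `|(ph n).[t]| by rewrite normr_gt0.
  rewrite -ler_pdivrMr //.
  rewrite /B.
  pose g (r0 : R) (m0 : nat) := `|(ph m0).[r0 - (D n).2]| / `|(ph n).[r0 - (D n).2]| +
      `|(ph m0).[r0 + (D n).2]| / `|(ph n).[r0 + (D n).2]|.
  have g0 : forall r0 m0, 0 <= g r0 m0 by move=> r0 m0; apply: addr_ge0.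
  apply: le_trans (@le_sum_seq _ _ (fun r0 => \sum_(m0 <- iota 0 n) g r0 m0) r urs _ rin); last first.
    by move=> i; apply: sumr_ge0 => k _.
  apply: le_trans (@le_sum_seq _ _ (g r) m (iota_uniq 0 n) (g0 r) _); last by rewrite mem_iota.
  rewrite /g.
  by case: ht => ->; rewrite ?lerDl ?lerDr; apply: divr_ge0.
exists rho; split => // K gamma K0 g0 gK.
pose G := \sum_(j < K) `|gamma j.+1|.
have G0 : 0 <= G by apply: sumr_ge0 => j _.
exists (maxn K (Num.Def.archi_bound G)); split; first exact: leq_maxl.
move=> n; rewrite geq_max => /andP[Kn bn].
have Gn : G < n%:R.
  apply: (lt_le_trans (archi_boundP G0)); by rewrite ler_nat.
have n0 : (0 < n)%N by apply: leq_trans Kn.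
rewrite big_ord_recl /= g0 subn0 scale1r.
have bump0 : forall i, bump 0 i = i.+1 by move=> i; rewrite /bump leq0n add1n.
under eq_bigr do rewrite bump0.
set E := \sum_(j < K) _.
have [urs srs d0 sg Hsep] := HD n.
apply: (@real_from_sign R _ _ _ urs _ d0).
- rewrite size_addl size_scale ?Hsz ?srs ?(gt_eqF (rho0 n)) //.
  rewrite ltnS /E; apply: (big_ind (fun p : {poly R} => (size p <= n)%N)).
  + by rewrite size_poly0.
  + move=> p q hp hq; apply: leq_trans (size_add p q) _; by rewrite geq_max hp hq.
  + move=> j _; apply: leq_trans (size_scale_leq _ _) _.
    apply: leq_trans (size_scale_leq _ _) _.
    by rewrite Hsz; have := ltn_ord j; lia.
- by move=> x y xin yin xy; apply: Hsep.
move=> r rin.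
have key2 : forall t, (t = r - (D n).2 \/ t = r + (D n).2) ->
    0 < (ph n).[t] * (rho n *: ph n + E).[t].
  move=> t ht.
  have [nz _] := bound n r 0%N t rin n0 ht.
  rewrite hornerD hornerZ; apply: pert_lemma => //.
  rewrite /E horner_sum.
  apply: (le_lt_trans (ler_norm_sum _ _ _)).
  pose C := rho n / f n * (B n * `|(ph n).[t]|).
  apply: (@le_lt_trans _ _ (\sum_(j < K) `|gamma j.+1| * C)).
    apply: ler_sum => j _.
    have jn : (n - j.+1 < n)%N by have := ltn_ord j; lia.
    have [_ hb] := bound n r _ t rin jn ht.
    rewrite !hornerZ !normrM (ger0_norm (ltW (rho0 _))) mulrA.
    rewrite -mulrA; apply: ler_wpM2l => //.
    apply: ler_pM => //; first exact: ltW.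
    exact: rho_step.
  rewrite -mulr_suml -/G.
  have Pt : 0 < `|(ph n).[t]| by rewrite normr_gt0.
  have Cf : C * f n = rho n * B n * `|(ph n).[t]|.
    by rewrite /C mulrAC divfK ?gt_eqF // mulrA.
  rewrite -(ltr_pM2r (f0 n)) -mulrA Cf /f.
  have := B0 n; have := rho0 n.
  set b := B n; set rh := rho n; set p := `|_|; set nn := (n.+1)%:R.
  have hnn : nn = n%:R + 1 by rewrite /nn -natr1.
  rewrite hnn => hr hb.
  have hGb : G * b <= n%:R * b by apply: ler_wpM2r => //; exact: ltW.
  have hX : 0 < rh * p by apply: mulr_gt0.
  have h : G * b < (n%:R + 1) * (1 + b) by nra.
  have -> : G * (rh * b * p) = (rh * p) * (G * b) by ring.
  by rewrite ltr_pM2l.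
apply: (@sgn_lemma ((ph n).[r - (D n).2]) ((ph n).[r + (D n).2])).
- by apply: key2; left.
- by apply: key2; right.
- exact: sg.
Qed.

End M.

Theorem mainTheorem3 (R : realType) (mu : {measure set R -> \bar R})
  (ph : nat -> {poly R}) :
  finite_moments mu -> infinite_set (msupport mu) -> monic_OPS mu ph ->
  exists rho : nat -> R, (forall n, 0 < rho n) /\
    forall (K : nat) (gamma : nat -> R), (0 < K)%N -> gamma 0%N = 1 ->
      gamma K != 0 ->
      exists N : nat, (K <= N)%N /\ forall n : nat, (N <= n)%N ->
        only_real_zeros (\sum_(j < K.+1) gamma j *: (rho (n - j)%N *: ph (n - j)%N)).
Proof. by move=> h1 h2 h3; apply: main_sec. Qed.
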